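(* If $U$ is a negative finite multiset on $\mathbb{N}^2$, then $\mathrm{BRSK}(U)$ is a negative semistandard notched bitableau.
   Context: $\mathbb{N}$ is the set of positive integers; a finite multiset on $\mathbb{N}^2$ is negative if each of its elements $(a,b)$ satisfies $a<b$. Notched tableau: finite sequence of rows $P_1,\dots,P_r$, each a left-justified, possibly empty row of boxes with positive integer entries; row strict if each row strictly increases left to right (a row is then identified with its set of entries). Notched bitableau: pair $(P,Q)$ of notched tableaux of the same shape. Termwise order on finite multisets of $\mathbb{N}$ of equal size: $\{a_1\le\dots\le a_k\}\le\{b_1\le\dots\le b_k\}$ iff $a_i\le b_i$ for all $i$; $A\lessdot B$ iff $A,B$ nonempty and $a_i<b_i$ for all $i$. ''$A-C\le B-D$'' means $A\sqcup D\le B\sqcup C$ (multiset union). $(P,Q)$ is semistandard if both are row strict and $P_1-Q_1\le\cdots\le P_r-Q_r$; negative if $P_i\lessdot Q_i$ for all $i$. Bounded insertion: for $b\in\mathbb{N}$, a row-strict notched tableau $P$ is semistandard on $b$ if the tableau $P^{<b}$ obtained by deleting all entries $\ge b$ has weakly decreasing row lengths (top to bottom) and weakly increasing columns. For such $P$ and $a<b$, $P\xleftarrow{b}a$ is computed by: (1) remove the entries $\ge b$ to get $P^{<b}$; (2) insert $a$ into $P^{<b}$ by row insertion: into a row, if $a$ exceeds all its entries append $a$ in a new box at the right end and stop; otherwise replace the smallest entry $\ge a$ by $a$ and insert the replaced entry into the next row the same way (a row below the last row counts as empty); the box added at the end is the new box; (3) put the removed entries back at the right ends of the rows they came from. BRSK: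 list $U=\{(a_1,b_1),\dots,(a_t,b_t)\}$ so that $b_1\ge\dots\ge b_t$ and $a_i\ge a_{i+1}$ whenever $b_i=b_{i+1}$. Start with $(P^{(0)},Q^{(0)})=(\emptyset,\emptyset)$; set $P^{(i+1)}=P^{(i)}\xleftarrow{b_{i+1}}a_{i+1}$, and obtain $Q^{(i+1)}$ by inserting $b_{i+1}$ at the left end of row $j$ of $Q^{(i)}$ (shifting that row right), where $j$ is the row of the new box. Then $\mathrm{BRSK}(U)=(P^{(t)},Q^{(t)})$. *)

(* Defs.v *)
From mathcomp Require Import all_boot.
Set Implicit Arguments. Unset Strict Implicit. Unset Printing Implicit Defensive.

(* A finite multiset on N^2 is a list of pairs (order irrelevant);
   a notched tableau is a list of rows, each a list of naturals
   (left to right). *)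
Definition tableau := seq (seq nat).

Definition mset_le (A B : seq nat) : bool :=
  all2 leq (sort leq A) (sort leq B).
Definition mset_lessdot (A B : seq nat) : bool :=
  [&& A != [::], B != [::] & all2 ltn (sort leq A) (sort leq B)].
(* "A - C <= B - D" means A ⊔ D <= B ⊔ C *)
Definition mset_diff_le (A C B D : seq nat) : bool :=
  mset_le (A ++ D) (B ++ C).

Definition notched_tableau (P : tableau) : bool :=
  all (all (fun x => 0 < x)) P.
Definition row_strict (P : tableau) : bool := all (sorted ltn) P.
Definition same_shape (P Q : tableau) : bool := map size P == map size Q.
Definition notched_bitableau (P Q : tableau) : bool :=
  [&& notched_tableau P, notched_tableau Q & same_shape P Q].

Definition semistandard (P Q : tableau) : Prop :=
  [/\ row_strict P, row_strict Q &
      forall i, i.+1 < size P ->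
        mset_diff_le (nth [::] P i) (nth [::] Q i)
                     (nth [::] P i.+1) (nth [::] Q i.+1)].
Definition negative_bitableau (P Q : tableau) : Prop :=
  forall i, i < size P -> mset_lessdot (nth [::] P i) (nth [::] Q i).

Definition row_insert (r : seq nat) (x : nat) : seq nat * option nat :=
  if has (fun z => x <= z) r then
    let y := head 0 (sort leq (filter (fun z => x <= z) r)) in
    (set_nth 0 r (index y r) x, Some y)
  else (rcons r x, None).

(* Row insertion into a tableau; returns the new tableau and the row index
   (0-based) of the new box.  A row below the last row counts as empty. *)
Fixpoint tab_insert (T : tableau) (x : nat) : tableau * nat :=
  match T with
  | [::] => ([:: [:: x]], 0)
  | r :: T' =>
      let (r', bumped) := row_insert r x in
      match bumped with
      | None => (r' :: T', 0)
      | Some y => let (T'', j) := tab_insert T' y in (r' :: T'', j.+1)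
      end
  end.

Definition bounded_insert (b : nat) (P : tableau) (a : nat) : tableau * nat :=
  let low := map (filter (fun z => z < b)) P in
  let high := map (filter (fun z => b <= z)) P in
  let (L, j) := tab_insert low a in
  ([seq nth [::] L i ++ nth [::] high i | i <- iota 0 (size L)], j).

(* listing order: b_1 >= b_2 >= ..., and a_i >= a_{i+1} when b_i = b_{i+1} *)
Definition brsk_order (p q : nat * nat) : bool :=
  (q.2 < p.2) || ((q.2 == p.2) && (q.1 <= p.1)).

Definition brsk_step (PQ : tableau * tableau) (ab : nat * nat)
  : tableau * tableau :=
  let (P, Q) := PQ in
  let (P', j) := bounded_insert ab.2 P ab.1 in
  (P', set_nth [::] Q j (ab.2 :: nth [::] Q j)).

Definition BRSK (U : seq (nat * nat)) : tableau * tableau :=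
  foldl brsk_step ([::], [::]) (sort brsk_order U).

(* U is a finite multiset on N^2 (N = positive integers) *)
Definition mset_on_N2 (U : seq (nat * nat)) : bool :=
  all (fun p => (0 < p.1) && (0 < p.2)) U.
Definition negative_mset (U : seq (nat * nat)) : bool :=
  all (fun p => p.1 < p.2) U.

(* Main.v *)
Require Import Defs.
From mathcomp Require Import all_boot zify.
Set Implicit Arguments. Unset Strict Implicit. Unset Printing Implicit Defensive.

Definition cnt (t : nat) (s : seq nat) := count (fun z => z < t) s.

Lemma set_nth_mid (r1 r2 : seq nat) y x :
  set_nth 0 (r1 ++ y :: r2) (size r1) x = r1 ++ x :: r2.
Proof. by elim: r1 => //= z r1 ->. Qed.

Lemma row_insertP r x :
  match row_insert r x with
  | (r', None) => r' = rcons r x /\ (forall z, z \in r -> z < x)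
  | (r', Some y) => [/\ y \in r, x <= y, (forall z, z \in r -> x <= z -> y <= z)
                     & exists r1 r2, r = r1 ++ y :: r2 /\ r' = r1 ++ x :: r2]
  end.
Proof.
rewrite /row_insert; case: ifP => H; last first.
  split=> // z zr; move/hasPn: (negbT H) => /(_ z zr); rewrite -ltnNge.
  done.
set F := filter _ r.
have: 0 < size (sort leq F) by rewrite size_sort size_filter -has_count.
case ES: (sort leq F) => [|y t] //= _.
have yF : y \in F by rewrite -(mem_sort leq) ES mem_head.
have hs : sorted leq (y :: t) by rewrite -ES; apply: sort_sorted; exact: leq_total.
have ht : all (leq y) t by apply: (order_path_min leq_trans).
move: yF; rewrite mem_filter => /andP [xy yr].
have ymin : forall z, z \in r -> x <= z -> y <= z.
  move=> z zr xz; have : z \in sort leq F by rewrite mem_sort mem_filter xz zr.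
  rewrite ES inE => /orP [/eqP -> //|zt]; exact: (allP ht).
split=> //.
exists (take (index y r) r), (drop (index y r).+1 r).
have Hr : r = take (index y r) r ++ y :: drop (index y r).+1 r.
  by rewrite -{2}[y](nth_index 0 yr) -drop_nth ?index_mem // cat_take_drop.
split=> //.
have Hs : size (take (index y r) r) = index y r.
  by rewrite size_takel // ltnW // index_mem.
move: Hr Hs; set r1 := take _ r; set r2 := drop _ r => Hr Hs.
by rewrite -Hs {1}Hr set_nth_mid.
Qed.

Lemma tab_size T x L j : tab_insert T x = (L, j) ->
  [/\ j <= size T, size L = maxn j.+1 (size T) &
      forall i, size (nth [::] L i) = size (nth [::] T i) + (i == j)].
Proof.
elim: T x L j => [|r T IH] x L j /=.
  by case=> <- <-; split=> // [[|[|i]]].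
have := row_insertP r x; case: (row_insert r x) => r' [y|].
  case=> _ _ _ [r1 [r2 [-> ->]]].
  case E: (tab_insert T y) => [L' j'] [<- <-].
  have [h1 h2 h3] := IH _ _ _ E.
  split=> //; first by rewrite /= h2 maxnSS.
  case=> [|i] /=; first by rewrite !size_cat /= addn0.
  by rewrite h3 eqSS.
case=> -> _ [<- <-]; split=> //=; first by rewrite maxnE; lia.
by case=> [|i] /=; rewrite ?size_rcons ?addn1 ?addn0.
Qed.

Lemma tab_all (p : pred nat) T x L j : tab_insert T x = (L, j) ->
  p x -> all (all p) T -> all (all p) L.
Proof.
elim: T x L j => [|r T IH] x L j /=.
  by case=> <- _ /= ->.
have := row_insertP r x; case: (row_insert r x) => r' [y|].
  case=> yr _ _ [r1 [r2 [Er ->]]].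
  case E: (tab_insert T y) => [L' j'] [<- _] px /andP [pr pT] /=.
  rewrite (IH _ _ _ E) ?andbT //; last exact: (allP pr).
  move: pr; rewrite Er !all_cat /= => /andP [-> /andP [_ ->]].
  by rewrite px.
case=> -> _ [<- _] px /andP [pr pT] /=.
by rewrite all_rcons px pr pT.
Qed.

Lemma tab_row0 T x L j : tab_insert T x = (L, j) ->
  nth [::] L 0 = (row_insert (nth [::] T 0) x).1.
Proof.
case: T => [|r T] /=; first by case=> <-.
by case: (row_insert r x) => r' [y|]; [case: (tab_insert T y) => L' j'|]; case=> <-.
Qed.

Lemma bump T a' a T1 j1 T2 j2 : tab_insert T a' = (T1, j1) ->
  tab_insert T1 a = (T2, j2) -> a <= a' -> j1 < j2.
Proof.
elim: T a' a T1 j1 T2 j2 => [|r T IH] a' a T1 j1 T2 j2 /=.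
  case=> E1 E2; subst T1 j1; move=> H aa; move: H; rewrite /= /row_insert /= aa /=.
  by case=> _ <-.
have := row_insertP r a'; case: (row_insert r a') => r' [y'|].
  case=> _ ay' _ [r1 [r2 [_ ->]]].
  case E: (tab_insert T y') => [T1' j1'] [<- <-] /=.
  have := row_insertP (r1 ++ a' :: r2) a; case: row_insert => r'' [y|].
    case=> _ _ ymin _.
    case E2: (tab_insert T1' y) => [T2' j2'] [_ <-] aa.
    have : y <= a' by apply: ymin => //; rewrite mem_cat mem_head orbT.
    move=> ya; rewrite ltnS; apply: (IH _ _ _ _ _ _ E E2); lia.
  case=> _ /(_ a'); rewrite mem_cat mem_head orbT => /(_ isT) H _ aa; lia.
case=> -> _ [<- <-] /=.
have := row_insertP (rcons r a') a; case: row_insert => r'' [y|].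
  by case: tab_insert => ? ? _ [_ <-].
case=> _ /(_ a'); rewrite mem_rcons mem_head => /(_ isT) H _ aa; lia.
Qed.

Definition tabP (T : tableau) :=
  (forall i, pairwise ltn (nth [::] T i)) /\
  (forall i s, cnt s (nth [::] T i.+1) <= cnt s (nth [::] T i)).

Lemma count_lt_strict (p q : pred nat) r z0 :
  (forall z, p z -> q z) -> z0 \in r -> q z0 -> ~~ p z0 -> count p r < count q r.
Proof.
move=> pq; elim: r => [|w r IH] //=; rewrite inE => /orP [/eqP <-|zr] qz pz.
  rewrite (negbTE pz) qz add0n add1n ltnS; exact: sub_count.
have := IH zr qz pz; case: (p w) (pq w) => /=; last lia.
by move=> /(_ isT) ->; lia.
Qed.

Lemma pairwise_replace r1 r2 y x :
  pairwise ltn (r1 ++ y :: r2) -> (forall z, z \in r1 -> z < x) -> x <= y ->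
  pairwise ltn (r1 ++ x :: r2).
Proof.
rewrite !pairwise_cat /= => /and3P [/allrelP H1 -> /andP [/allP H2 ->]] H3 xy.
rewrite andbT; apply/andP; split.
  apply/allrelP => u v ur; rewrite inE => /orP [/eqP ->|vr]; first exact: H3.
  by apply: H1 => //; rewrite inE vr orbT.
apply/allP => z zr; have := H2 z zr; rewrite /=; lia. 
Qed.

Lemma pairwise_rcons r x :
  pairwise ltn r -> (forall z, z \in r -> z < x) -> pairwise ltn (rcons r x).
Proof.
move=> H1 H2; rewrite -cats1 pairwise_cat H1 /= andbT.
apply/allrelP => u v ur; rewrite inE => /eqP ->; exact: H2.
Qed.

Lemma cnt_cat s a b : cnt s (a ++ b) = cnt s a + cnt s b.
Proof. exact: count_cat. Qed.

Lemma cnt_replace s r1 r2 x y :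
  cnt s (r1 ++ x :: r2) + (y < s) = cnt s (r1 ++ y :: r2) + (x < s).
Proof. rewrite !cnt_cat /cnt /=; lia. Qed.

Lemma cnt_rcons s r x : cnt s (rcons r x) = cnt s r + (x < s).
Proof. rewrite -cats1 cnt_cat /cnt /=; lia. Qed.

Lemma dom_step r1 r2 x y rr :
  (forall s, cnt s rr <= cnt s (r1 ++ y :: r2)) -> x <= y ->
  forall s, cnt s (row_insert rr y).1 <= cnt s (r1 ++ x :: r2).
Proof.
move=> H xy s.
have Hr := cnt_replace s r1 r2 x y.
have strict : forall u, u <= y -> cnt u (r1 ++ y :: r2) < cnt s (r1 ++ y :: r2) \/ s <= y.
  move=> u uy; case: (ltnP y s) => ys; last by right.
  left; apply: (count_lt_strict (z0:=y)); first by move=> z /=; lia.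
    by rewrite mem_cat mem_head orbT.
  by []. by rewrite -leqNgt.
have := row_insertP rr y; case: (row_insert rr y) => rr' [y'|] /=.
  case=> y'r yy' ymin [q1 [q2 [Eq ->]]].
  have Hq := cnt_replace s q1 q2 y y'; rewrite -Eq in Hq.
  have := H s; case: (ltnP y s) => ys; last by move: Hr Hq; case: (ltnP x s); case: (ltnP y' s); lia.
  case: (ltnP y' s) => y's; first by move: Hr Hq; case: (ltnP x s); lia.
  have E : cnt s rr = cnt y rr.
    apply: eq_in_count => z zr /=; case: (ltnP z y) => zy; first lia.
    have := ymin z zr zy; lia.
  have := H y; have [|] := strict y (leqnn y); last lia.
  move: Hr Hq E; case: (ltnP x s); lia.
case=> -> allr; rewrite cnt_rcons.
have := H s; case: (ltnP y s) => ys; last by move: Hr; case: (ltnP x s); lia.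
have E : cnt s rr = cnt y rr.
  apply: eq_in_count => z zr /=; have := allr z zr; lia.
have := H y; have [|] := strict y (leqnn y); last lia.
move: Hr E; case: (ltnP x s); lia.
Qed.

Lemma tab_tabP T x L j : tab_insert T x = (L, j) -> tabP T -> tabP L.
Proof.
elim: T x L j => [|r T IH] x L j /=.
  case=> <- _ _; split; first by case=> [|[|i]].
  by case=> [|i] s //=; rewrite /cnt /=; lia.
move=> EL [Hs Hd]; move: EL.
have tT : tabP T by split=> [i|i s]; [exact: (Hs i.+1)|exact: (Hd i.+1)].
have := row_insertP r x; case: (row_insert r x) => r' [y|].
  case=> yr xy ymin [r1 [r2 [Er ->]]].
  case E: (tab_insert T y) => [L' j'] [<- _].
  have [Hs' Hd'] := IH _ _ _ E tT.
  have r1x : forall z, z \in r1 -> z < x.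
    move=> z zr1; have zr : z \in r by rewrite Er mem_cat zr1.
    have := Hs 0; rewrite /= Er pairwise_cat => /and3P [/allrelP H _ _].
    have zy : z < y by apply: H => //; exact: mem_head.
    case: (ltnP z x) => // xz; have := ymin z zr xz; lia.
  split.
    case=> [|i] /=; last exact: Hs'.
    by apply: (pairwise_replace (y:=y)) => //; rewrite -Er; exact: (Hs 0).
  case=> [|i] s /=; last exact: Hd'.
  rewrite (tab_row0 E); apply: dom_step => // s'; rewrite -Er; exact: (Hd 0).
case=> -> allr [<- _]; split.
  case=> [|i] /=; last exact: (Hs i.+1).
  by apply: pairwise_rcons => //; exact: (Hs 0).
case=> [|i] s /=; last exact: (Hd i.+1).
rewrite cnt_rcons; have := Hd 0 s => /=; lia.
Qed.

Lemma sorted_cnt s k t : sorted leq s -> k < size s ->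
  (nth 0 s k < t) = (k < cnt t s).
Proof.
elim: s k => [|x s IH] k //= hs.
have hx : all (leq x) s by apply: (order_path_min leq_trans).
have ss : sorted leq s by apply: (path_sorted hs).
have hz : t <= x -> count (fun z => z < t) s = 0.
  move=> tx; apply/eqP; rewrite -leqn0 leqNgt -has_count; apply/hasPn => z zs /=.
  have := allP hx z zs; lia.
case: k => [|k] /= ks.
  rewrite /cnt /=; case: (ltnP x t) => //= xt; by rewrite hz.
rewrite IH // /cnt /=; case: (ltnP x t) => xt /=; first by rewrite add1n ltnS.
by rewrite add0n hz.
Qed.

Lemma all2_nth (r : nat -> nat -> bool) s1 s2 : size s1 = size s2 ->
  (forall k, k < size s1 -> r (nth 0 s1 k) (nth 0 s2 k)) -> all2 r s1 s2.
Proof.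
elim: s1 s2 => [|x s1 IH] [|y s2] //= [hs] h.
rewrite (h 0) //= IH // => k ks; exact: (h k.+1).
Qed.

Lemma cnt_sort_le A B d : size A = size B ->
  (forall t, cnt (t + d) B <= cnt t A) ->
  forall k, k < size A -> nth 0 (sort leq A) k + d <= nth 0 (sort leq B) k.
Proof.
move=> hs h k kA.
have sA : sorted leq (sort leq A) by apply: sort_sorted; exact: leq_total.
have sB : sorted leq (sort leq B) by apply: sort_sorted; exact: leq_total.
set t := nth 0 (sort leq A) k.
have h1 := sorted_cnt t sA (k:=k); rewrite size_sort ltnn in h1.
have h2 := sorted_cnt (t + d) sB (k:=k); rewrite size_sort -hs in h2.
have h3 := h t; move: (h1 kA) (h2 kA); rewrite /cnt !count_sort => e1 e2.
move: h3; rewrite /cnt => h3.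
case: (ltnP (nth 0 (sort leq B) k) (t + d)) e2 => // _ e2.
move/esym/negbT: e1; rewrite -leqNgt => e1; move/esym: e2 => e2; lia.
Qed.

Lemma mset_le_cnt A B : size A = size B ->
  (forall t, cnt t B <= cnt t A) -> mset_le A B.
Proof.
move=> hs h; apply: all2_nth; first by rewrite !size_sort.
move=> k; rewrite size_sort => kA.
have := cnt_sort_le (d:=0) hs _ kA; rewrite addn0; apply=> t; rewrite addn0; exact: h.
Qed.

Lemma mset_lessdot_cnt A B : size A = size B -> A != [::] ->
  (forall t, cnt t.+1 B <= cnt t A) -> mset_lessdot A B.
Proof.
move=> hs hA h; rewrite /mset_lessdot hA /=.
apply/andP; split; first by case: B hs {h} => //; case: A hA.
apply: all2_nth; first by rewrite !size_sort.
move=> k; rewrite size_sort => kA.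
have := cnt_sort_le (d:=1) hs _ kA; rewrite addn1; apply=> t; rewrite addn1; exact: h.
Qed.

Definition Inv (P Q : tableau) (ap m : nat) : Prop :=
  [/\ size Q = size P,
      (forall i, size (nth [::] Q i) = size (nth [::] P i)),
      (forall i, i < size P -> 0 < size (nth [::] P i)),
      (forall i, pairwise ltn (nth [::] P i) /\ pairwise ltn (nth [::] Q i)) &
      (forall i, all (fun z => 0 < z) (nth [::] P i) /\ all (fun z => m <= z) (nth [::] Q i))] /\
  [/\ 0 < m,
  (forall i t, cnt t (nth [::] P i.+1) + cnt t (nth [::] Q i) <=
               cnt t (nth [::] P i) + cnt t (nth [::] Q i.+1)),
  (forall i s, cnt s.+1 (nth [::] Q i) <= cnt s (nth [::] P i)) &
  ((exists i, m \in nth [::] Q i) -> exists T0 jp,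
      tab_insert T0 ap = (map (filter (fun z => z < m)) P, jp) /\
      forall i, m \in nth [::] Q i -> i <= jp)].

Lemma nth_map_filter (p : pred nat) (P : tableau) i :
  nth [::] (map (filter p) P) i = filter p (nth [::] P i).
Proof. by elim: P i => [|r P IH] [|i] //=. Qed.

Lemma cnt_split t b X :
  cnt t (filter (fun z => z < b) X) + cnt t (filter (fun z => b <= z) X) = cnt t X.
Proof.
elim: X => [|x X IH] //=; rewrite /cnt /=; case: (ltnP x b) => /= _; move: IH; rewrite /cnt; lia.
Qed.

Lemma size_split b X :
  size (filter (fun z => z < b) X) + size (filter (fun z => b <= z) X) = size X.
Proof.
elim: X => [|x X IH] //=; case: (ltnP x b) => /= _; lia.
Qed.

Lemma all_nth_all (p : pred nat) (T : tableau) i : all (all p) T -> all p (nth [::] T i).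
Proof. by elim: T i => [|r T IH] [|i] //= /andP [] // _ /IH. Qed.

Lemma cnt_all t X : all (fun z => z < t) X -> cnt t X = size X.
Proof.
move/allP => h; rewrite /cnt (eq_in_count (a2 := predT)) ?count_predT // => z /h.
Qed.

Lemma cnt_none t X : all (fun z => t <= z) X -> cnt t X = 0.
Proof.
move/allP => h; rewrite /cnt (eq_in_count (a2 := pred0)) ?count_pred0 // => z /h /=; lia.
Qed.

Lemma cnt_filter_lt s b X :
  cnt s (filter (fun z => z < b) X) = cnt (minn s b) X.
Proof. rewrite /cnt count_filter; apply: eq_count => z /=; rewrite leq_min. done. Qed.

Lemma step_inv P Q ap m a b : Inv P Q ap m -> brsk_order (ap, m) (a, b) ->
  0 < a -> a < b ->
  Inv (brsk_step (P, Q) (a, b)).1 (brsk_step (P, Q) (a, b)).2 a b.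
Proof.
move=> [[I1 I2 I3 I4 I5] [m0 I8 I9 I10]] ord a0 ab.
have bm : b <= m by move: ord; rewrite /brsk_order /=; case/orP; [lia| case/andP => /eqP ->].
rewrite /brsk_step /bounded_insert /=.
set low := map (filter (fun z => z < b)) P.
set high := map (filter (fun z => b <= z)) P.
case E: (tab_insert low a) => [L j] /=.
have [Hj HsL HsLi] := tab_size E.
have szlow : size low = size P by rewrite size_map.
have szhigh : size high = size P by rewrite size_map.
set P' := [seq _ | i <- _].
set Q' := set_nth _ _ _ _.
have nP' : forall i, nth [::] P' i = nth [::] L i ++ nth [::] high i.
  move=> i; case: (ltnP i (size L)) => iL.
    by rewrite /P' (nth_map 0) ?size_iota // nth_iota.
  have hh : size high <= i by rewrite szhigh; move: iL; rewrite HsL szlow; lia.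
  rewrite (nth_default _ iL) (nth_default _ hh) nth_default //.
  by rewrite size_map size_iota.
have szP' : size P' = size L by rewrite size_map size_iota.
have nQ' : forall i, nth [::] Q' i = if i == j then b :: nth [::] Q i else nth [::] Q i.
  by move=> i; rewrite /Q' nth_set_nth /=; case: eqP => [->|].
have nlow : forall i, nth [::] low i = filter (fun z => z < b) (nth [::] P i).
  by move=> i; rewrite nth_map_filter.
have nhigh : forall i, nth [::] high i = filter (fun z => b <= z) (nth [::] P i).
  by move=> i; rewrite nth_map_filter.
have Lb : all (all (fun z => z < b)) L.
  apply: (tab_all E) => //; apply/allP => r /mapP [x _ ->]; rewrite all_filter.
  by apply/allP => z _ /=; apply/implyP.
have Lpos : all (all (fun z => 0 < z)) L.
  apply: (tab_all E) => //; apply/allP => r /mapP [x xP ->]; rewrite all_filter.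
  have [i iP ->] : exists2 i, i < size P & x = nth [::] P i.
    by exists (index x P); [rewrite index_mem | rewrite nth_index].
  have [h _] := I5 i; apply/allP => z zi /=; apply/implyP => _; exact: (allP h).
have Qm : forall i t, t <= m -> cnt t (nth [::] Q i) = 0.
  move=> i t tm; apply: cnt_none; have [_ h] := I5 i.
  by apply/allP => z /(allP h) /=; lia.
have tlow : tabP low.
  split=> [i|i s]; first by rewrite nlow; apply: pairwise_filter; have [] := I4 i.
  rewrite !nlow !cnt_filter_lt; have := I8 i (minn s b).
  have hm : minn s b <= m by rewrite geq_min bm orbT.
  by rewrite !Qm //; lia.
have [tL1 tL2] := tab_tabP E tlow.
have highb : forall i, all (fun z => b <= z) (nth [::] high i).
  by move=> i; rewrite nhigh all_filter; apply/allP => z _; apply/implyP.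
have Lib : forall i, all (fun z => z < b) (nth [::] L i) by move=> i; apply: all_nth_all.
have cPlo : forall i t, t <= b -> cnt t (nth [::] P' i) = cnt t (nth [::] L i).
  move=> i t tb; rewrite nP' cnt_cat (cnt_none (t:=t) (X:=nth [::] high i)) ?addn0 //.
  by apply/allP => z /(allP (highb i)) /=; lia.
have cPhi : forall i t, b <= t -> cnt t (nth [::] P' i) = cnt t (nth [::] P i) + (i == j).
  move=> i t bt; rewrite nP' cnt_cat (cnt_all (t:=t) (X:=nth [::] L i)); last first.
    by apply/allP => z /(allP (Lib i)) /=; lia.
  rewrite HsLi -(cnt_split t b (nth [::] P i)) -nlow -nhigh (cnt_all (t:=t) (X:=nth [::] low i)); first lia.
  rewrite nlow all_filter; apply/allP => z _; apply/implyP => /=; lia.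
have cQlo : forall i t, t <= b -> cnt t (nth [::] Q' i) = 0.
  move=> i t tb; rewrite nQ'; case: (i == j); last by apply: Qm; lia.
  rewrite /cnt /= -/(cnt t _) Qm; lia.
have cQhi : forall i t, b < t -> cnt t (nth [::] Q' i) = cnt t (nth [::] Q i) + (i == j).
  move=> i t bt; rewrite nQ'; case: (i == j); last by rewrite addn0.
  rewrite /cnt /= bt; lia.
have sQ' : forall i, size (nth [::] Q' i) = size (nth [::] Q i) + (i == j).
  by move=> i; rewrite nQ'; case: (i == j) => //=; lia.
have sP' : forall i, size (nth [::] P' i) = size (nth [::] P i) + (i == j).
  move=> i; rewrite nP' size_cat HsLi nlow nhigh -(size_split b (nth [::] P i)); lia.
split; split.
- by rewrite size_set_nth szP' HsL szlow I1.
- by move=> i; rewrite sQ' sP' I2.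
- move=> i; rewrite szP' HsL szlow sP' => iP.
  case: (ltnP i (size P)) => ip; first by have := I3 i ip; lia.
  have -> : i = j by move: iP Hj; rewrite szlow maxnE; lia.
  by rewrite eqxx addn1.
- move=> i; split.
    rewrite nP' pairwise_cat tL1 andbC /=.
    have -> : pairwise ltn (nth [::] high i).
      by rewrite nhigh pairwise_filter //; have [] := I4 i.
    apply/allrelP => u v /(allP (Lib i)) /= ub /(allP (highb i)) /= bv; lia.
  rewrite nQ'; case: eqP => [ij|]; last by have [] := I4 i.
  have [_ pq] := I4 i; rewrite /= pq andbT; apply/allP => z zQ; change (b < z).
  have [_ hm] := I5 i; have mz := allP hm z zQ; rewrite /= in mz.
  case: (ltnP b m) => bm'; first lia.
  have ebm : b = m by lia.
  case: (ltnP b z) => // zb.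
  have ez : z = m by lia.
  have [T0 [jp [E0 Hjp]]] : exists T0 jp, tab_insert T0 ap = (low, jp) /\
      forall i, m \in nth [::] Q i -> i <= jp.
    by rewrite /low ebm; apply: I10; exists i; rewrite -ez.
  have aap : a <= ap by move: ord; rewrite /brsk_order /= ebm ltnn /= eqxx.
  have := bump E0 E aap; have := Hjp i; rewrite -ez zQ -ij => /(_ isT); lia.
- move=> i; split.
    rewrite nP' all_cat (all_nth_all _ Lpos) /= nhigh all_filter; apply/allP => z zP.
    by apply/implyP => /=; lia.
  have [_ hm] := I5 i.
  rewrite nQ'; case: (i == j) => /=; [rewrite leqnn /= |]; apply/allP => z /(allP hm) /=; lia.
- lia.
- move=> i t; case: (leqP t b) => tb.
    by rewrite !cQlo // !cPlo // !addn0; apply: tL2.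
  rewrite !cPhi ?cQhi //; try lia; have := I8 i t; lia.
- move=> i s; case: (ltnP s b) => sb; first by rewrite cQlo.
  rewrite cQhi // cPhi //; have := I9 i s; lia.
- move=> _; exists low, j; split.
    rewrite E; congr (_, _); rewrite /P' -map_comp.
    rewrite -[LHS](mkseq_nth [::] L) /mkseq; apply: eq_map => i /=.
    rewrite filter_cat (all_filterP (Lib i)) -[LHS]cats0; congr (_ ++ _).
    rewrite nhigh -filter_predI; apply/esym/eqP; rewrite -size_eq0 size_filter -leqn0.
    rewrite leqNgt -has_count; apply/hasPn => z _ /=; lia.
  move=> i; rewrite nQ'; case: eqP => [->//|ij] biQ.
  have [_ hm] := I5 i; have mb := allP hm b biQ; rewrite /= in mb.
  have ebm : b = m by lia.
  have [T0 [jp [E0 Hjp]]] : exists T0 jp, tab_insert T0 ap = (low, jp) /\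
      forall i, m \in nth [::] Q i -> i <= jp.
    by rewrite /low ebm; apply: I10; exists i; rewrite -ebm.
  have aap : a <= ap by move: ord; rewrite /brsk_order /= ebm ltnn /= eqxx.
  have := bump E0 E aap; have := Hjp i; rewrite -ebm biQ => /(_ isT); lia.
Qed.

Definition Final (st : tableau * tableau) : Prop :=
  notched_bitableau st.1 st.2 /\ semistandard st.1 st.2 /\ negative_bitableau st.1 st.2.

Lemma inv_final P Q ap m : Inv P Q ap m -> Final (P, Q).
Proof.
move=> [[I1 I2 I3 I4 I5] [m0 I8 I9 I10]]; rewrite /Final /=.
split; [|split].
- rewrite /notched_bitableau /notched_tableau /same_shape.
  apply/and3P; split.
  + apply/(all_nthP [::]) => i _; have [] := I5 i; done.
  + apply/(all_nthP [::]) => i iQ; have [_ h] := I5 i.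
    apply/allP => z /(allP h) /=; lia.
  + apply/eqP/(eq_from_nth (x0:=0)); first by rewrite !size_map.
    move=> i; rewrite size_map => iP.
    have iQ : i < size Q by rewrite I1.
    by rewrite (nth_map [::] _ _ iP) (nth_map [::] _ _ iQ) I2.
- split.
  + apply/(all_nthP [::]) => i _; have [h _] := I4 i; by rewrite (sorted_pairwise ltn_trans).
  + apply/(all_nthP [::]) => i _; have [_ h] := I4 i; by rewrite (sorted_pairwise ltn_trans).
  + move=> i _; apply: mset_le_cnt.
      by rewrite !size_cat !I2; lia.
    by move=> t; rewrite !cnt_cat; have := I8 i t; lia.
- move=> i iP; apply: mset_lessdot_cnt; first by rewrite I2.
    by rewrite -size_eq0 -lt0n; apply: I3.
  exact: I9.
Qed.

Definition good (x : nat * nat) := (0 < x.1) && (x.1 < x.2).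

Lemma fold_inv s P Q p : Inv P Q p.1 p.2 -> path brsk_order p s -> all good s ->
  Final (foldl brsk_step (P, Q) s).
Proof.
elim: s P Q p => [|[a b] s IH] P Q [ap m]; first by move=> /inv_final.
move=> hI /andP [o hp] /andP [/andP [a0 ab] hs].
have := step_inv hI o a0 ab.
move=> hI0; change (Final (foldl brsk_step (brsk_step (P, Q) (a, b)) s)); move: hI0.
case: (brsk_step (P, Q) (a, b)) => P' Q' /= hI'.
exact: (IH P' Q' (a, b)).
Qed.

Theorem lemma6p2 (U : seq (nat * nat)) :
  mset_on_N2 U -> negative_mset U ->
  notched_bitableau (BRSK U).1 (BRSK U).2 /\
  semistandard (BRSK U).1 (BRSK U).2 /\
  negative_bitableau (BRSK U).1 (BRSK U).2.
Proof.
move=> hN hneg; rewrite /BRSK.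
have tot : total brsk_order.
  move=> p q; rewrite /brsk_order; case: (ltngtP p.2 q.2) => //= _; exact: leq_total.
have hs := sort_sorted tot U.
have hg : all good (sort brsk_order U).
  apply/allP => x; rewrite mem_sort => xU.
  rewrite /good (allP hneg x xU) andbT; have := allP hN x xU; case/andP => //.
case E: (sort brsk_order U) hs hg => [|x s] /=.
  move=> _ _; split; [done|split; [split=> //|]] => // i //.
move=> hp /andP [gx gs].
apply: (fold_inv (p := x)) => //.
move: gx {hp E}; case: x => x1 x2; rewrite /good /= => /andP [x10 x12].
split; split=> //.
- by case=> [|[|i]].
- by case=> [|[|i]].
- by case=> [|[|i]] //=; rewrite pairwise_cons.
- by case=> [|[|i]] //=; rewrite ?x10 ?leqnn.
- lia.
- case=> [|[|i]] t; rewrite /cnt //=; case: (ltnP x2 t); case: (ltnP x1 t); lia.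
- case=> [|[|i]] t; rewrite /cnt //=; case: (ltnP x2 t.+1); case: (ltnP x1 t); lia.
- move=> _; exists [::], 0; split; first by rewrite /= x12.
  by case=> [|i]; rewrite /= ?nth_nil.
Qed.
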